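(* Let $S \geq 1$ and, for $i = 1,\dots,S$, let $\boldsymbol{M}_i \in \mathbb{R}^{m_i \times m_i}$ be symmetric positive definite, let $\boldsymbol{K}_i \in \mathbb{R}^{m_i \times m_i}$ be symmetric positive semidefinite, and let $\boldsymbol{C}_i \in \mathbb{R}^{p \times m_i}$ be signed Boolean matrices such that $[\boldsymbol{C}_1 \ \cdots \ \boldsymbol{C}_S]$ has full row rank $p$. Let $0 \leq \gamma \leq 1$ and $\Delta t > 0$, and if $\gamma < 1/2$ assume in addition that $\Delta t \, (1-2\gamma)\, \omega_i^{\max} < 2$ for every $i$, where $\omega_i^{\max}$ is the largest eigenvalue of $\boldsymbol{K}_i \boldsymbol{\phi} = \omega \boldsymbol{M}_i \boldsymbol{\phi}$. Suppose sequences $\boldsymbol{d}_i^{(n)}, \boldsymbol{v}_i^{(n)} \in \mathbb{R}^{m_i}$ and $\boldsymbol{\lambda}^{(n)} \in \mathbb{R}^p$, $n\ge 0$, satisfy (the $\boldsymbol{v}$-continuity method with zero external forcing): for all $n \geq 0$ and all $i$, $\boldsymbol{M}_i \boldsymbol{v}_i^{(n)} + \boldsymbol{K}_i \boldsymbol{d}_i^{(n)} = \boldsymbol{C}_i^{\mathrm{T}} \boldsymbol{\lambda}^{(n)}$ and $\sum_{i=1}^S \boldsymbol{C}_i \boldsymbol{v}_i^{(n)} = \boldsymbol{0}$; and for all $n \geq 1$, $\boldsymbol{d}_i^{(n)} = \boldsymbol{d}_i^{(n-1)} + \Delta t\left((1-\gamma)\boldsymbol{v}_i^{(n-1)} + \gamma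 \boldsymbol{v}_i^{(n)}\right)$. Then the sequences $(\boldsymbol{v}_i^{(n)})_{n}$, $(\boldsymbol{d}_i^{(n+1)} - \boldsymbol{d}_i^{(n)})_{n}$ ($i = 1,\dots,S$) and $(\boldsymbol{\lambda}^{(n+1)} - \boldsymbol{\lambda}^{(n)})_{n}$ are bounded.
   Context: A signed Boolean matrix is a matrix whose entries are in $\{-1,0,+1\}$ and each of whose rows has at most one nonzero entry. A sequence of vectors is bounded if there is a constant $C$ independent of $n$ with $\|\boldsymbol{x}^{(n)}\| < C$ for all $n$. *)

(* Defs.v *)
From HB Require Import structures.
From mathcomp Require Import all_boot all_order all_algebra.
From mathcomp Require Import all_classical all_reals all_analysis.
Set Implicit Arguments. Unset Strict Implicit. Unset Printing Implicit Defensive.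
Import Order.TTheory GRing.Theory Num.Theory.
Import numFieldNormedType.Exports.
Local Open Scope ring_scope.

Definition sym_pos_def {R : realType} {n : nat} (A : 'M[R]_n) : Prop :=
  A^T = A /\ forall x : 'cV[R]_n, x != 0 -> 0 < (x^T *m A *m x) ord0 ord0.

Definition sym_pos_semidef {R : realType} {n : nat} (A : 'M[R]_n) : Prop :=
  A^T = A /\ forall x : 'cV[R]_n, 0 <= (x^T *m A *m x) ord0 ord0.

Definition signed_boolean {R : realType} {p m : nat} (C : 'M[R]_(p, m)) : Prop :=
  (forall i j, C i j = 0 \/ C i j = 1 \/ C i j = -1) /\
  (forall i j k, C i j != 0 -> C i k != 0 -> j = k).

Definition gen_eigenvalue {R : realType} {n : nat} (K M : 'M[R]_n) (w : R) : Prop :=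
  exists phi : 'cV[R]_n, phi != 0 /\ K *m phi = w *: (M *m phi).

Definition largest_gen_eigenvalue {R : realType} {n : nat} (K M : 'M[R]_n) (w : R) : Prop :=
  gen_eigenvalue K M w /\ forall w', gen_eigenvalue K M w' -> w' <= w.

(* A sequence of vectors is bounded (w.r.t. the (sup) norm of the normed
   space of matrices; all norms on a finite-dimensional space are equivalent). *)
Definition bounded_seq {R : realType} {n : nat} (x : nat -> 'cV[R]_n) : Prop :=
  exists C : R, forall k, `|x k| < C.

(* Main.v *)
Require Import Defs.
From HB Require Import structures.
From mathcomp Require Import all_boot all_order all_algebra.
From mathcomp Require Import all_classical all_reals all_analysis.
From mathcomp Require Import ring lra.
Import Order.TTheory GRing.Theory Num.Theory.
Import numFieldNormedType.Exports.
Local Open Scope ring_scope.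
Section Aux.
Context {R : realType}.
Definition bnd {a b} (x : nat -> 'M[R]_(a,b)) := exists c : R, forall k i j, `|x k i j| <= c.

Lemma entry_le_norm {a b} (x : 'M[R]_(a,b)) i j : `|x i j| <= `|x|.
Proof.
by rewrite [leRHS]/Num.norm /= mx_normrE; apply/bigmax_geP; right => /=; exists (i, j).
Qed.

Lemma norm_le {a b} (x : 'M[R]_(a,b)) c : 0 <= c -> (forall i j, `|x i j| <= c) -> `|x| <= c.
Proof.
move=> c0 H; rewrite [leLHS]/Num.norm /= mx_normrE; apply/bigmax_leP; split => // -[i j] _; exact: H.
Qed.

Lemma bnd_seq {n} (x : nat -> 'cV[R]_n) : bnd x -> bounded_seq x.
Proof.
move=> [c Hc]; exists (`|c| + 1) => k.
have H : `|x k| <= `|c|.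
  apply: norm_le => // i j; exact: le_trans (Hc k i j) (ler_norm c).
by apply: (le_lt_trans H); rewrite ltrDl.
Qed.

Lemma bnd_ge0 {a b} (x : nat -> 'M[R]_(a,b)) : bnd x -> exists c, 0 <= c /\ forall k i j, `|x k i j| <= c.
Proof.
move=> [c Hc]; exists `|c|; split => // k i j; exact: le_trans (Hc k i j) (ler_norm c).
Qed.

Lemma bnd0 {a b} : bnd (fun _ => 0 : 'M[R]_(a,b)).
Proof. by exists 0 => k i j; rewrite mxE normr0. Qed.

Lemma bnd_add {a b} (x y : nat -> 'M[R]_(a,b)) : bnd x -> bnd y -> bnd (fun k => x k + y k).
Proof.
move=> [c Hc] [e He]; exists (c + e) => k i j; rewrite mxE.
exact: le_trans (ler_normD _ _) (lerD (Hc k i j) (He k i j)).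
Qed.

Lemma bnd_opp {a b} (x : nat -> 'M[R]_(a,b)) : bnd x -> bnd (fun k => - x k).
Proof. by move=> [c Hc]; exists c => k i j; rewrite mxE normrN. Qed.

Lemma bnd_sub {a b} (x y : nat -> 'M[R]_(a,b)) : bnd x -> bnd y -> bnd (fun k => x k - y k).
Proof. by move=> hx hy; apply: bnd_add => //; exact: bnd_opp. Qed.

Lemma bnd_scale {a b} (l : R) (x : nat -> 'M[R]_(a,b)) : bnd x -> bnd (fun k => l *: x k).
Proof.
move=> [c Hc]; exists (`|l| * c) => k i j; rewrite mxE normrM.
exact: ler_wpM2l (Hc k i j).
Qed.

Lemma bnd_shift {a b} (x : nat -> 'M[R]_(a,b)) : bnd x -> bnd (fun k => x k.+1).
Proof. by move=> [c Hc]; exists c => k; exact: Hc. Qed.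

Lemma bnd_tr {a b} (x : nat -> 'M[R]_(a,b)) : bnd x -> bnd (fun k => (x k)^T).
Proof. by move=> [c Hc]; exists c => k i j; rewrite mxE. Qed.

Lemma bnd_mul {a b e} (A : 'M[R]_(a,b)) (x : nat -> 'M[R]_(b,e)) : bnd x -> bnd (fun k => A *m x k).
Proof.
move=> /bnd_ge0 [c [c0 Hc]]; exists (b%:R * (`|A| * c)) => k i j; rewrite mxE.
apply: le_trans (ler_norm_sum _ _ _) _.
have -> : b%:R * (`|A| * c) = \sum_(l < b) (`|A| * c) by rewrite sumr_const card_ord mulr_natl.
apply: ler_sum => l _; rewrite normrM; apply: ler_pM => //; exact: entry_le_norm.
Qed.

Lemma bnd_mulr {a b e} (A : 'M[R]_(b,e)) (x : nat -> 'M[R]_(a,b)) : bnd x -> bnd (fun k => x k *m A).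
Proof.
move=> hx; have [c Hc] := @bnd_tr _ _ _ (@bnd_mul _ _ _ A^T _ (@bnd_tr _ _ _ hx)).
by exists c => k i j; move: (Hc k i j); rewrite trmx_mul !trmxK.
Qed.

Lemma bnd_sum (I : eqType) (r : seq I) {a b} (f : I -> nat -> 'M[R]_(a,b)) :
  (forall i, bnd (f i)) -> bnd (fun k => \sum_(i <- r) f i k).
Proof.
move=> H; elim: r => [|i r IH].
  by under eq_fun do rewrite big_nil; exact: bnd0.
by under eq_fun do rewrite big_cons; exact: bnd_add.
Qed.
End Aux.
Section Q.
Context {R : realType}.
Lemma entB {a b} (X Y : 'M[R]_(a,b)) i j : (X - Y) i j = X i j - Y i j.
Proof. by rewrite !mxE. Qed.
Lemma entD {a b} (X Y : 'M[R]_(a,b)) i j : (X + Y) i j = X i j + Y i j.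
Proof. by rewrite mxE. Qed.
Lemma entZ {a b} c (X : 'M[R]_(a,b)) i j : (c *: X) i j = c * X i j.
Proof. by rewrite mxE. Qed.
Definition bil {n} (A : 'M[R]_n) (x y : 'cV[R]_n) : R := (x^T *m A *m y) ord0 ord0.
Definition qf {n} (A : 'M[R]_n) (x : 'cV[R]_n) : R := bil A x x.

Lemma bilDl {n} (A : 'M[R]_n) x y z : bil A (x + y) z = bil A x z + bil A y z.
Proof. by rewrite /bil linearD /= !mulmxDl mxE. Qed.
Lemma bilDr {n} (A : 'M[R]_n) x y z : bil A z (x + y) = bil A z x + bil A z y.
Proof. by rewrite /bil mulmxDr mxE. Qed.
Lemma bilZl {n} (A : 'M[R]_n) c x y : bil A (c *: x) y = c * bil A x y.
Proof. by rewrite /bil linearZ /= -!scalemxAl mxE. Qed.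
Lemma bilZr {n} (A : 'M[R]_n) c x y : bil A x (c *: y) = c * bil A x y.
Proof. by rewrite /bil -scalemxAr mxE. Qed.
Lemma bilNl {n} (A : 'M[R]_n) x y : bil A (- x) y = - bil A x y.
Proof. by rewrite -scaleN1r bilZl mulN1r. Qed.
Lemma bilNr {n} (A : 'M[R]_n) x y : bil A x (- y) = - bil A x y.
Proof. by rewrite -scaleN1r bilZr mulN1r. Qed.
Lemma bilBl {n} (A : 'M[R]_n) x y z : bil A (x - y) z = bil A x z - bil A y z.
Proof. by rewrite bilDl bilNl. Qed.
Lemma bilBr {n} (A : 'M[R]_n) x y z : bil A z (x - y) = bil A z x - bil A z y.
Proof. by rewrite bilDr bilNr. Qed.
Lemma bil0l {n} (A : 'M[R]_n) y : bil A 0 y = 0.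
Proof. by rewrite /bil trmx0 !mul0mx mxE. Qed.
Lemma bil0r {n} (A : 'M[R]_n) y : bil A y 0 = 0.
Proof. by rewrite /bil mulmx0 mxE. Qed.
Lemma bil_sym {n} (A : 'M[R]_n) x y : A^T = A -> bil A x y = bil A y x.
Proof.
move=> hA; rewrite /bil.
have -> : (x^T *m A *m y) ord0 ord0 = ((x^T *m A *m y)^T) ord0 ord0.
  by rewrite [RHS]mxE.
by rewrite !trmx_mul trmxK hA mulmxA.
Qed.
Lemma bil_mul {n} (A : 'M[R]_n) x y : bil A x y = ((x^T *m (A *m y)) ord0 ord0).
Proof. by rewrite /bil mulmxA. Qed.
Lemma bilMl {n} (A B : 'M[R]_n) x y : bil (A - B) x y = bil A x y - bil B x y.
Proof. by rewrite /bil mulmxBr mulmxBl entB. Qed.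
Lemma bilZm {n} (A : 'M[R]_n) c x y : bil (c *: A) x y = c * bil A x y.
Proof. by rewrite /bil -scalemxAr -scalemxAl entZ. Qed.

Lemma qf_expand {n} (A : 'M[R]_n) x y t : A^T = A ->
  qf A (x + t *: y) = qf A x + 2 * t * bil A x y + t ^+ 2 * qf A y.
Proof.
move=> hA; rewrite /qf !(bilDl, bilDr, bilZl, bilZr) (bil_sym A y x hA).
rewrite expr2; ring.
Qed.

Lemma qfZ {n} (A : 'M[R]_n) c x : qf A (c *: x) = c ^+ 2 * qf A x.
Proof. by rewrite /qf bilZl bilZr expr2 mulrA. Qed.
Lemma qf0 {n} (A : 'M[R]_n) : qf A 0 = 0.
Proof. by rewrite /qf bil0l. Qed.
End Q.
Section C.
Context {R : realType}.

Lemma norm_tr {a b} (x : 'M[R]_(a,b)) : `|x^T| = `|x|.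
Proof.
apply/eqP; rewrite eq_le; apply/andP; split; apply: norm_le => // i j.
  by rewrite mxE; exact: entry_le_norm.
have -> : x i j = x^T j i by rewrite mxE.
exact: entry_le_norm.
Qed.

Lemma cont_sum (T : topologicalType) (I : Type) (r : seq I) (f : I -> T -> R) :
  (forall i, continuous (f i)) -> continuous (fun y => \sum_(i <- r) f i y).
Proof.
move=> H; elim: r => [|i r IH].
  under eq_fun do rewrite big_nil; exact: cst_continuous.
under eq_fun do rewrite big_cons; move=> y; exact: (continuousD (H i y) (IH y)).
Qed.

Lemma qcont n (A : 'M[R]_n) : continuous (fun y : 'rV[R]_n => qf A y^T).
Proof.
have E : (fun y : 'rV[R]_n => qf A y^T) =
   (fun y => \sum_(j < n) (\sum_(i < n) y ord0 i * A i j) * y ord0 j).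
  apply: funext => y; rewrite /qf /bil trmxK mxE; apply: eq_bigr => j _.
  by rewrite !mxE; congr (_ * _); apply: eq_bigr => i _; rewrite mxE.
rewrite E; apply: cont_sum => j y; apply: continuousM; last exact: coord_continuous.
apply: cont_sum => i z; apply: continuousM; first exact: coord_continuous.
exact: cst_continuous.
Qed.

Definition sph n : set 'rV[R]_n := fun y => `|y| = 1.
Arguments sph n : clear implicits.

Lemma sph_compact n : compact (sph n).
Proof.
apply: bounded_closed_compact.
  exists 1; split => // M M1 y Sy; rewrite /= Sy; exact: ltW.
have -> : sph n = preimage (fun y : 'rV[R]_n => `|y|) (set1 1) by [].
apply: preimage_closed; last exact: closed_eq.
move=> y _; exact: norm_continuous.
Qed.

Lemma sph_norm {n} (x : 'cV[R]_n) : x != 0 -> sph n (`|x|^-1 *: x)^T.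
Proof.
move=> x0; rewrite /sph /= norm_tr normrZ normfV normr_id mulVf //.
by rewrite normr_eq0.
Qed.

Lemma qf_scale {n} (A : 'M[R]_n) x : x != 0 -> `|x| ^+ 2 * qf A (`|x|^-1 *: x) = qf A x.
Proof.
move=> x0; rewrite qfZ mulrA -exprMn mulfV ?expr1n ?mul1r //.
by rewrite normr_eq0.
Qed.

Lemma tr_neq0 {n} (y : 'rV[R]_n) : sph n y -> y^T != 0.
Proof.
rewrite /sph => hy; apply/eqP => h.
by move: hy; rewrite -norm_tr h normr0 => /eqP; rewrite eq_sym oner_eq0.
Qed.

Lemma coercive n (M : 'M[R]_n) : (forall x, x != 0 -> 0 < qf M x) ->
  exists c, 0 < c /\ forall x, c * `|x| ^+ 2 <= qf M x.
Proof.
move=> HM.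
case: (pselect (sph n !=set0)%classic) => [ne|e].
  have [y0 y0S Hmin] := compact_EVT_min ne (sph_compact n) (continuous_subspaceT (qcont _ M)).
  exists (qf M y0^T); split.
    by apply: HM; apply: tr_neq0; move/set_mem: y0S.
  move=> x; case: (eqVneq x 0) => [->|x0].
    by rewrite normr0 expr0n /= mulr0 qf0.
  have := Hmin _ (mem_set (sph_norm x x0)); rewrite trmxK => h.
  rewrite -(qf_scale M x x0) mulrC; apply: ler_wpM2l => //; exact: sqr_ge0.
exists 1; split => // x; case: (eqVneq x 0) => [->|x0].
  by rewrite normr0 expr0n /= mulr0 qf0.
by exfalso; apply: e; exists (`|x|^-1 *: x)^T; exact: sph_norm x x0.
Qed.

Lemma pert n (G : 'M[R]_n) x0 : G^T = G -> (forall x, qf G x <= 0) -> qf G x0 = 0 ->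
  G *m x0 = 0.
Proof.
move=> hG hle h0; set r := G *m x0.
have Hb : bil G x0 r = (r^T *m r) ord0 ord0.
  rewrite /bil; congr (_ ord0 ord0); congr (_ *m _).
  by rewrite /r trmx_mul hG.
set s := (r^T *m r) ord0 ord0.
have sE : s = \sum_i (r i ord0) ^+ 2.
  by rewrite /s mxE; apply: eq_bigr => i _; rewrite mxE expr2.
have s0 : 0 <= s by rewrite sE; apply: sumr_ge0 => i _; exact: sqr_ge0.
set g := qf G r.
have g0 : g <= 0 by exact: hle.
set t := s / (1 - g).
have g1 : 0 < 1 - g by lra.
have ts : t * (1 - g) = s by rewrite /t divfK // gt_eqF.
have H := hle (x0 + t *: r); rewrite qf_expand // h0 Hb -/s -/g in H.
have t0 : 0 <= t by rewrite /t divr_ge0 // ltW.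
have : t = 0 by nra.
move=> tz; have {}sz : s = 0 by rewrite -ts tz mul0r.
apply/matrixP => i j; rewrite (ord1 j) [RHS]mxE.
have : (r i ord0) ^+ 2 = 0.
  rewrite sE in sz; apply: (psumr_eq0P _ sz) => // k _; exact: sqr_ge0.
by move/eqP; rewrite sqrf_eq0 => /eqP.
Qed.

Lemma rayleigh n (K M : 'M[R]_n) : sym_pos_def M -> sym_pos_semidef K ->
  exists w, 0 <= w /\ (forall x, qf K x <= w * qf M x) /\
    (largest_gen_eigenvalue K M w \/ w = 0).
Proof.
move=> [hMs hMp] [hKs hKp].
have hMp' : forall x, x != 0 -> 0 < qf M x by exact: hMp.
have hKp' : forall x, 0 <= qf K x by exact: hKp.
case: (pselect (sph n !=set0)%classic) => [ne|e]; last first.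
  have allz : forall x : 'cV[R]_n, x = 0.
    move=> x; apply/eqP; apply/negP => /negP x0; apply: e.
    by exists (`|x|^-1 *: x)^T; exact: sph_norm x x0.
  exists 0; split => //; split; last by right.
  by move=> x; rewrite (allz x) qf0 mul0r.
pose F := fun y : 'rV[R]_n => qf K y^T / qf M y^T.
have cF : {within sph n, continuous F}%classic.
  apply: continuous_in_subspaceT => y /set_mem Sy.
  have hy : qf M y^T != 0 by rewrite gt_eqF // hMp' // tr_neq0.
  exact: (continuousM (qcont _ K y) (@continuousV _ _ (fun y => qf M y^T) y hy (qcont _ M y))).
have [y0 y0S Hmax] := compact_EVT_max ne (sph_compact n) cF.
move/set_mem: y0S => y0S.
set w := F y0; set x0 := y0^T.
have x00 : x0 != 0 by exact: tr_neq0.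
have Mx0 := hMp' _ x00.
have Ray : forall x, qf K x <= w * qf M x.
  move=> x; case: (eqVneq x 0) => [->|xn0]; first by rewrite !qf0 mulr0.
  have := Hmax _ (mem_set (sph_norm x xn0)); rewrite /F trmxK.
  have Mu : 0 < qf M (`|x|^-1 *: x).
    by apply: hMp'; rewrite scaler_eq0 negb_or xn0 andbT invr_eq0 normr_eq0.
  rewrite ler_pdivrMr // => h.
  rewrite -(qf_scale K x xn0) -(qf_scale M x xn0) mulrCA.
  apply: ler_wpM2l => //; exact: sqr_ge0.
exists w; split; first by rewrite /w /F divr_ge0 // ltW.
split => //; left.
set G := K - w *: M.
have hG : G^T = G by rewrite /G linearB /= linearZ /= hKs hMs.
have qG : forall x, qf G x = qf K x - w * qf M x.
  by move=> x; rewrite /qf /G bilMl bilZm.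
have Gx0 : G *m x0 = 0.
  apply: pert => //.
    by move=> x; rewrite qG subr_le0.
  by rewrite qG /w /F -/x0 divfK ?subrr // gt_eqF.
have eig : K *m x0 = w *: (M *m x0).
  by apply/eqP; rewrite -subr_eq0 scalemxAl -mulmxBl -/G Gx0.
split; first by exists x0.
move=> w' [phi [phi0 hphi]].
have Mp := hMp' _ phi0.
have : qf K phi = w' * qf M phi.
  by rewrite /qf !bil_mul hphi -scalemxAr [LHS]mxE.
move=> e1; have := Ray phi; rewrite e1 ler_pM2r //.
Qed.

Lemma step_ineq n (M K : 'M[R]_n) (a b : 'cV[R]_n) (g dt w c : R) :
  M^T = M -> K^T = K -> (forall x, 0 <= qf M x) -> (forall x, 0 <= qf K x) ->
  (forall x, qf K x <= w * qf M x) -> 0 <= w -> 0 < dt -> 0 <= g ->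
  c = (if g < 1/2 then 4 * (1/2 - g) else 0) ->
  (g < 1/2 -> dt * (1 - 2 * g) * w < 2) ->
  qf M b - qf M a <= 2 * (bil M ((1 - g) *: a + g *: b) (b - a) + dt * qf K ((1 - g) *: a + g *: b))
     + c * (qf M (b - a) + dt * bil K (b - a) ((1 - g) *: a + g *: b)).
Proof.
move=> hMs hKs hM hK hR w0 dt0 g0 hc hst.
set d := b - a; set z := (1 - g) *: a + g *: b.
have eb : b = a + 1 *: d by apply/matrixP => i j; rewrite !mxE; ring.
have ez : z = a + g *: d.
  by apply/matrixP => i j; rewrite !mxE; ring.
have iden : qf M b - qf M a = 2 * bil M z d + (1 - 2 * g) * qf M d.
  rewrite {1}eb qf_expand // ez bilDl bilZl /qf; ring.
rewrite iden; set P := qf M d; set Q := qf K z; set X := bil K d z.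
have P0 : 0 <= P by exact: hM.
have Q0 : 0 <= Q by exact: hK.
case: ltP hc hst => hg -> hst.
  set r := 1/2 - g.
  have r0 : 0 < r by rewrite /r subr_gt0.
  have hw : r * dt * w <= 1.
    have := hst isT; have -> : 1 - 2 * g = 2 * r by rewrite /r; field.
    move=> h; nra.
  have hp := hK (d + r^-1 *: z); rewrite qf_expand // -/Q -/X in hp.
  have hKd := hR d; rewrite -/P in hKd.
  have H1 : 0 <= 2 * r^+2 * dt * (qf K d + 2 * r^-1 * X + r^-1 ^+ 2 * Q).
    apply: mulr_ge0 => //; apply: mulr_ge0; [apply: mulr_ge0 => //; exact: sqr_ge0 | exact: ltW].
  have E1 : 2 * r^+2 * dt * (qf K d + 2 * r^-1 * X + r^-1 ^+ 2 * Q) = 2 * r^+2 * dt * qf K d + 4 * r * dt * X + 2 * dt * Q.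
    by field; rewrite gt_eqF.
  rewrite E1 in H1.
  have H2 : 2 * r^+2 * dt * qf K d <= 2 * r * P.
    have : 2 * r^+2 * dt * qf K d <= 2 * r^+2 * dt * (w * P).
      apply: ler_wpM2l => //; apply: mulr_ge0; [apply: mulr_ge0 => //; exact: sqr_ge0|exact: ltW].
    move=> h; apply: (le_trans h); rewrite expr2.
    have : (2 * r) * (r * dt * w) * P <= (2 * r) * 1 * P.
      apply: ler_wpM2r => //; apply: ler_wpM2l => //; rewrite mulr_ge0 // ltW //.
    by rewrite mulr1; apply: le_trans; rewrite le_eqVlt; apply/orP; left; apply/eqP; ring.
  have -> : 1 - 2 * g = 2 * r by rewrite /r; field.
  rewrite /X /Q in H1 H2 *; lra.
have h12 : 0 <= 2 * g - 1.
  by rewrite subr_ge0; move: hg; rewrite ler_pdivrMr // mulrC.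
rewrite mul0r addr0.
have : 0 <= (2 * g - 1) * P by exact: mulr_ge0.
have : 0 <= dt * Q by rewrite mulr_ge0 // ltW.
lra.
Qed.
End C.

Lemma sum_constr {R : realType} (S p : nat) (m : 'I_S -> nat) (C : forall i, 'M[R]_(p, m i))
  (z : forall i, 'cV[R]_(m i)) (mu : 'cV[R]_p) :
  \sum_i C i *m z i = 0 -> \sum_i ((z i)^T *m ((C i)^T *m mu)) ord0 ord0 = 0.
Proof.
move=> H.
under eq_bigr do rewrite mulmxA -trmx_mul.
by rewrite -summxE -mulmx_suml -linear_sum H linear0 mul0mx mxE.
Qed.

Lemma rowfree_decomp {R : realType} (S p : nat) (m : 'I_S -> nat) (C : forall i, 'M[R]_(p, m i))
  (x : 'rV[R]_p) :
  \rank (\mxrow_(i < S) C i) = p ->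
  x = \sum_i (x *m C i) *m submxcol (pinvmx (\mxrow_(i < S) C i)) i.
Proof.
set A := \mxrow_(i < S) C i => hr.
have rf : row_free A by rewrite /row_free hr.
have h1 : x *m A *m pinvmx A = x.
  apply: (row_free_inj rf); rewrite mulmxKpV //; exact: submxMl.
rewrite -{1}h1 -{1}(submxcolK (pinvmx A)) /A mul_mxrow mul_mxrow_mxcol.
by [].
Qed.

Theorem mainTheorem4 (R : realType) (S p : nat) (m : 'I_S -> nat)
  (M K : forall i : 'I_S, 'M[R]_(m i))
  (C : forall i : 'I_S, 'M[R]_(p, m i))
  (gamma dt : R)
  (d v : forall i : 'I_S, nat -> 'cV[R]_(m i))
  (lam : nat -> 'cV[R]_p) :
  (0 < S)%N ->
  (forall i, sym_pos_def (M i)) ->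
  (forall i, sym_pos_semidef (K i)) ->
  (forall i, signed_boolean (C i)) ->
  \rank (\mxrow_(i < S) C i) = p ->
  0 <= gamma -> gamma <= 1 -> 0 < dt ->
  (gamma < 1 / 2 ->
     forall i w, largest_gen_eigenvalue (K i) (M i) w ->
       dt * (1 - 2 * gamma) * w < 2) ->
  (forall n i, M i *m v i n + K i *m d i n = (C i)^T *m lam n) ->
  (forall n, \sum_(i < S) C i *m v i n = 0) ->
  (forall n i, d i n.+1 = d i n + dt *: ((1 - gamma) *: v i n + gamma *: v i n.+1)) ->
  (forall i, bounded_seq (v i)) /\
  (forall i, bounded_seq (fun n => d i n.+1 - d i n)) /\
  bounded_seq (fun n => lam n.+1 - lam n).
Proof.
move=> S0 hM hK hC hrank g0 g1 dt0 hstab heq hsum hd.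
pose w i n := (1 - gamma) *: v i n + gamma *: v i n.+1.
have hdd : forall i n, d i n.+1 - d i n = dt *: w i n.
  by move=> i n; rewrite hd addrAC subrr add0r.
have hE1 : forall i n, (C i)^T *m (lam n.+1 - lam n) =
    M i *m (v i n.+1 - v i n) + K i *m (d i n.+1 - d i n).
  by move=> i n; rewrite mulmxBr -!heq !mulmxBr opprD addrACA.
have hlf : forall i n z, (z^T *m ((C i)^T *m (lam n.+1 - lam n))) ord0 ord0 =
    bil (M i) z (v i n.+1 - v i n) + dt * bil (K i) z (w i n).
  move=> i n z; rewrite hE1 hdd -scalemxAr mulmxDr -scalemxAr entD entZ.
  by rewrite -!bil_mul.
pose E n := \sum_i qf (M i) (v i n).
pose c := if gamma < 1/2 then 4 * (1/2 - gamma) else 0.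
have step : forall n, E n.+1 <= E n.
  move=> n; rewrite -subr_le0 /E -sumrB.
  apply: le_trans (_ : \sum_i (2 * (bil (M i) (w i n) (v i n.+1 - v i n) + dt * qf (K i) (w i n))
     + c * (qf (M i) (v i n.+1 - v i n) + dt * bil (K i) (v i n.+1 - v i n) (w i n))) <= 0).
    apply: ler_sum => i _.
    have [hMs hMp] := hM i; have [hKs hKp] := hK i.
    have [om [om0 [hR hL]]] := rayleigh _ _ _ (hM i) (hK i).
    apply: step_ineq => //.
    - move=> x; case: (eqVneq x 0) => [->|x0]; first by rewrite qf0.
      exact: ltW (hMp x x0).
    - move=> hg; case: hL => [hL|->]; first exact: hstab hg i om hL.
      by rewrite mulr0.
  rewrite big_split /= -!mulr_sumr.
  have A0 : \sum_i (bil (M i) (w i n) (v i n.+1 - v i n) + dt * qf (K i) (w i n)) = 0.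
    transitivity (\sum_i ((w i n)^T *m ((C i)^T *m (lam n.+1 - lam n))) ord0 ord0).
      by apply: eq_bigr => i _; rewrite hlf.
    apply: (sum_constr _ _ _ C (fun i => w i n)); rewrite /w.
    under eq_bigr do rewrite mulmxDr -!scalemxAr.
    by rewrite big_split /= -!scaler_sumr !hsum !scaler0 addr0.
  have B0 : \sum_i (qf (M i) (v i n.+1 - v i n) + dt * bil (K i) (v i n.+1 - v i n) (w i n)) = 0.
    transitivity (\sum_i ((v i n.+1 - v i n)^T *m ((C i)^T *m (lam n.+1 - lam n))) ord0 ord0).
      by apply: eq_bigr => i _; rewrite hlf.
    apply: (sum_constr _ _ _ C (fun i => v i n.+1 - v i n)).
    under eq_bigr do rewrite mulmxBr.
    by rewrite sumrB !hsum subrr.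
  by rewrite A0 B0 !mulr0 addr0.
have Ebnd : forall n, E n <= E 0.
  by elim => // n IH; exact: le_trans (step n) IH.
have vb : forall i, bnd (v i).
  move=> i.
  have [hMs hMp] := hM i.
  have [cc [cc0 hc]] := coercive _ _ hMp.
  exists (1 + E 0 / cc) => n j k.
  apply: le_trans (entry_le_norm _ j k) _.
  have h1 : qf (M i) (v i n) <= E 0.
    apply: le_trans (Ebnd n); rewrite /E (bigD1 i) //= lerDl.
    apply: sumr_ge0 => l _; case: (eqVneq (v l n) 0) => [->|x0]; first by rewrite qf0.
    have [_ hMl] := hM l; exact: ltW (hMl _ x0).
  have h2 : `|v i n| ^+ 2 <= E 0 / cc.
    by rewrite ler_pdivlMr // mulrC; apply: le_trans (hc _) h1.
  have := normr_ge0 (v i n); nra.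
split; first by move=> i; apply: bnd_seq.
split.
  move=> i; apply: bnd_seq.
  have -> : (fun n => d i n.+1 - d i n) = (fun n => dt *: w i n).
    by apply: funext => n; rewrite hdd.
  apply: bnd_scale; rewrite /w; apply: bnd_add; apply: bnd_scale => //.
  exact: bnd_shift.
apply: bnd_seq.
have hx : bnd (fun n => (lam n.+1 - lam n)^T).
  have -> : (fun n => (lam n.+1 - lam n)^T) = (fun n => \sum_(i <- index_enum 'I_S)
       ((C i)^T *m (lam n.+1 - lam n))^T *m submxcol (pinvmx (\mxrow_(i < S) C i)) i).
    apply: funext => n; rewrite {1}(rowfree_decomp _ _ _ C (lam n.+1 - lam n)^T hrank); apply: eq_bigr => i _.
    by rewrite trmx_mul trmxK.
  apply: bnd_sum => i; apply: bnd_mulr; apply: bnd_tr.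
  under eq_fun do rewrite hE1.
  apply: bnd_add; apply: bnd_mul.
    by apply: bnd_sub => //; exact: bnd_shift.
  under eq_fun do rewrite hdd.
  apply: bnd_scale; rewrite /w; apply: bnd_add; apply: bnd_scale => //.
  exact: bnd_shift.
have [cb Hb] := hx; exists cb => n i j.
by have := Hb n j i; rewrite mxE.
Qed.
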